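(* Let $R$ be the ring of integers of a nonarchimedean local field of characteristic not $2$ in which $2$ is a prime element. (a) If an $R$-lattice $J$ is isotropic, then $\mathbb{H}\perp J$ primitively represents all binary lattices of the form $2^a\mathbb{H}$ for every integer $a\ge0$. (b) If an $R$-lattice $J$ primitively represents $2^{a+1}\epsilon$ for an integer $a\ge0$ and a unit $\epsilon\in R$, then $\mathbb{H}\perp J$ primitively represents the binary lattices $2^a\mathbb{H}$ and $2^a\mathbb{A}$. In particular, $\mathbb{H}^2$ primitively represents $2^a\mathbb{H}$ and $2^a\mathbb{A}$ for every integer $a\ge 0$. Hence, for every $n\ge1$, $\mathbb{H}^n$ primitively represents all even $R$-lattices of rank $n$.
   Context: An $R$-lattice is a finitely generated $R$-submodule of a quadratic space $(V,B)$ over $F$ with $Q(v)=B(v,v)$, assumed integral ($B(L,L)\subseteq R$) and nondegenerate; it is even if $Q(L)\subseteq 2R$, and isotropic if $Q(v)=0$ for some nonzero $v\in L$. $L$ primitively represents $\alpha\in R$ if $\alpha=Q(v)$ for a primitive vector $v$ (one with $Rv$ a direct summand). A representation is an $R$-linear map preserving $B$, primitive if its image is a direct summand. Fix $\rho\in R^\times$ such that $\Delta=1-4\rho$ is a nonsquare unit. For $\alpha\in R$, $\alpha\mathbb{H}$ and $\alpha\mathbb{A}$ are the binary lattices with Gram matrices $\begin{pmatrix}0&\alpha\\\alpha&0\end{pmatrix}$ and $\begin{pmatrix}2\alpha&\alpha\\\alpha&2\rho\alpha\end{pmatrix}$; $\mathbb{H}=1\mathbb{H}$, $\mathbb{A}=1\mathbb{A}$,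 and $\mathbb{H}^n$ is the orthogonal sum of $n$ copies of $\mathbb{H}$. *)

(* Defs.v *)
From HB Require Import structures.
From mathcomp Require Import all_boot all_order all_algebra.
Set Implicit Arguments. Unset Strict Implicit. Unset Printing Implicit Defensive.
Import Order.TTheory GRing.Theory Num.Theory.
Local Open Scope ring_scope.

Section Defs.
Variable R : idomainType.

Definition dvd2pow (k : nat) (x : R) : Prop := exists y : R, x = 2 ^+ k * y.

(** R is the ring of integers of a nonarchimedean local field of
    characteristic not 2 in which 2 is a prime element: R is a discrete
    valuation ring with uniformizer 2 (every nonzero element is a unit times
    a power of 2, and 2 is a nonzero nonunit), complete for the 2-adic
    topology, with finite residue field R/2R.  (2 <> 0 forces characteristic
    0 of the fraction field, in particular characteristic not 2.) *)
Record dyadic_local_ring : Prop := DyadicLocalRing {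
  two_neq0 : (2 : R) != 0;
  two_nonunit : (2 : R) \isn't a GRing.unit;
  unit_pow2_factor : forall x : R, x != 0 ->
      exists (k : nat) (u : R), u \is a GRing.unit /\ x = u * 2 ^+ k;
  residue_finite : exists s : seq R, forall x : R,
      exists2 y, y \in s & dvd2pow 1 (x - y);
  complete : forall f : nat -> R, (forall n, dvd2pow n (f n.+1 - f n)) ->
      exists x : R, forall n, dvd2pow n (x - f n)
}.

(** Lattices are given by Gram matrices w.r.t. a basis (lattices over the
    DVR R are free); entries in R = integrality. *)
Definition is_lattice n (G : 'M[R]_n) : Prop := G^T = G /\ \det G != 0.

Definition Qf n (G : 'M[R]_n) (v : 'rV[R]_n) : R := (v *m G *m v^T) 0 0.

Definition is_even n (G : 'M[R]_n) : Prop := forall v, dvd2pow 1 (Qf G v).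

Definition isotropic n (G : 'M[R]_n) : Prop := exists v, v != 0 /\ Qf G v = 0.

Definition rowspan n m (X : 'M[R]_(n, m)) : 'rV[R]_m -> Prop :=
  fun v => exists u : 'rV[R]_n, v = u *m X.

Definition direct_summand m (S : 'rV[R]_m -> Prop) : Prop :=
  exists N : 'rV[R]_m -> Prop,
    [/\ N 0,
        (forall x y, N x -> N y -> N (x + y)),
        (forall (c : R) x, N x -> N (c *: x)),
        (forall v, exists a b, [/\ S a, N b & v = a + b]) &
        (forall v, S v -> N v -> v = 0)].

(** Primitive representation of the lattice with Gram G by the lattice with
    Gram H: a B-preserving linear map (rows of X = images of basis vectors)
    whose image is a direct summand. *)
Definition prim_rep n m (G : 'M[R]_n) (H : 'M[R]_m) : Prop :=
  exists X : 'M[R]_(n, m), X *m H *m X^T = G /\ direct_summand (rowspan X).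

Definition prim_rep_elt m (H : 'M[R]_m) (alpha : R) : Prop :=
  exists v : 'rV[R]_m, Qf H v = alpha /\ direct_summand (rowspan (v : 'M_(1, m))).

Definition osum m n (G : 'M[R]_m) (H : 'M[R]_n) : 'M[R]_(m + n) :=
  block_mx G 0 0 H.

Definition hypmx (alpha : R) : 'M[R]_2 :=
  \matrix_(i < 2, j < 2) (if i == j then 0 else alpha).
Definition anmx (rho alpha : R) : 'M[R]_2 :=
  \matrix_(i < 2, j < 2)
    (if i == j then (if i == 0 :> nat then 2 * alpha else 2 * rho * alpha)
     else alpha).

Fixpoint Hpow (n : nat) : 'M[R]_(n.*2) :=
  match n return 'M[R]_(n.*2) with
  | 0 => 0
  | n'.+1 => osum (hypmx 1) (Hpow n')
  end.

End Defs.

(* Main.v *)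
Require Import Defs.
From mathcomp Require Import all_boot all_order all_algebra.
From mathcomp Require Import ring.
From Stdlib Require Import Classical.
Import GRing.Theory.
Local Open Scope ring_scope.

Lemma d2_add {R : idomainType} n (x y : R) : dvd2pow n x -> dvd2pow n y -> dvd2pow n (x + y).
Proof. by move=> [a ->] [b ->]; exists (a + b); rewrite mulrDr. Qed.
Lemma d2_opp {R : idomainType} n (x : R) : dvd2pow n x -> dvd2pow n (- x).
Proof. by move=> [a ->]; exists (- a); rewrite mulrN. Qed.
Lemma d2_sub {R : idomainType} n (x y : R) : dvd2pow n x -> dvd2pow n y -> dvd2pow n (x - y).
Proof. by move=> hx hy; apply: d2_add => //; apply: d2_opp. Qed.
Lemma d2_mull {R : idomainType} n (c x : R) : dvd2pow n x -> dvd2pow n (c * x).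
Proof. by move=> [a ->]; exists (c * a); ring. Qed.
Lemma d2_mulr {R : idomainType} n (c x : R) : dvd2pow n x -> dvd2pow n (x * c).
Proof. by move=> [a ->]; exists (a * c); ring. Qed.
Lemma d2_mul {R : idomainType} m n (x y : R) : dvd2pow m x -> dvd2pow n y -> dvd2pow (m + n) (x * y).
Proof. by move=> [a ->] [b ->]; exists (a * b); rewrite exprD; ring. Qed.
Lemma d2_S {R : idomainType} n (x : R) : dvd2pow n.+1 x -> dvd2pow n x.
Proof. by move=> [a ->]; exists (2 * a); rewrite exprS; ring. Qed.
Lemma d2_le {R : idomainType} m n (x : R) : (m <= n)%N -> dvd2pow n x -> dvd2pow m x.
Proof.
move=> /subnK <-; elim: (n - m)%N => [|k IH] //= h; apply: IH; exact: d2_S.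
Qed.
Lemma d2_0 {R : idomainType} n : dvd2pow n (0 : R).
Proof. by exists 0; rewrite mulr0. Qed.

Lemma two_not_unit_mul {R : idomainType} (hR : dyadic_local_ring R) (y : R) :
  (2 * y) \isn't a GRing.unit.
Proof. by rewrite unitrM negb_and (two_nonunit hR). Qed.

Lemma d2_all0 {R : idomainType} (hR : dyadic_local_ring R) (x : R) :
  (forall n, dvd2pow n x) -> x = 0.
Proof.
move=> h; apply/eqP; apply/negPn/negP => /(unit_pow2_factor hR) [k [u [hu hx]]].
have [y hy] := h k.+1.
have : u = 2 * y.
  apply: (mulIf (expf_neq0 k (two_neq0 hR))).
  by rewrite -hx hy exprSr; ring.
by move=> e; move: hu; rewrite e (negbTE (two_not_unit_mul hR y)).
Qed.

Lemma nondiv_unit {R : idomainType} (hR : dyadic_local_ring R) (x : R) :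
  ~ dvd2pow 1 x -> x \is a GRing.unit.
Proof.
move=> h; have x0 : x != 0 by apply/eqP=> e; apply: h; rewrite e; apply: d2_0.
have [[|k] [u [hu hx]]] := unit_pow2_factor hR x0.
  by rewrite hx expr0 mulr1.
by exfalso; apply: h; exists (u * 2 ^+ k); rewrite hx exprS; ring.
Qed.

Lemma sq_d2 {R : idomainType} (hR : dyadic_local_ring R) (z : R) :
  dvd2pow 1 (z ^+ 2) -> dvd2pow 1 z.
Proof.
move=> [w hw]; apply: NNPP => hz.
have := nondiv_unit hR _ hz => uz.
have : (z ^+ 2) \is a GRing.unit by rewrite unitrX.
by rewrite hw expr1 (negbTE (two_not_unit_mul hR w)).
Qed.

Lemma sq_inj2 {R : idomainType} (hR : dyadic_local_ring R) (x y : R) :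
  dvd2pow 1 (x ^+ 2 - y ^+ 2) -> dvd2pow 1 (x - y).
Proof.
move=> h; apply: (sq_d2 hR).
have -> : (x - y) ^+ 2 = (x ^+ 2 - y ^+ 2) - 2 * (y * (x - y)) by ring.
apply: d2_sub => //; exists (y * (x - y)); by rewrite expr1.
Qed.

Lemma sq_injn {R : idomainType} (hR : dyadic_local_ring R) k (x y : R) :
  dvd2pow 1 (x ^+ (2 ^ k) - y ^+ (2 ^ k)) -> dvd2pow 1 (x - y).
Proof.
elim: k => [|k IH]; first by rewrite !expn0 !expr1.
rewrite expnSr !exprM => h; apply: IH; exact: sq_inj2 hR _ _ h.
Qed.

Lemma residue_sqrt {R : idomainType} (hR : dyadic_local_ring R) (t : R) :
  exists y, dvd2pow 1 (t - y ^+ 2).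
Proof.
have [s hs] := residue_finite hR.
have : forall k : 'I_(size s).+1, exists j : 'I_(size s),
    dvd2pow 1 (t ^+ (2 ^ k) - nth 0 s j).
  move=> k; have [y ys hy] := hs (t ^+ (2 ^ k)).
  by exists (Ordinal (etrans (index_mem y s) ys) : 'I_(size s)) => /=; rewrite nth_index.
case/fin_all_exists => f hf.
have : ~~ injectiveb f.
  apply/negP => /injectiveP /leq_card; by rewrite !card_ord ltnn.
case/injectivePn => k [l] kl fkl.
have key : forall k l : 'I_(size s).+1, (k < l)%N -> f k = f l ->
    exists y, dvd2pow 1 (t - y ^+ 2).
  move=> k0 l0 lt e.
  have h : dvd2pow 1 (t ^+ (2 ^ k0) - t ^+ (2 ^ l0)).
    have -> : t ^+ (2 ^ k0) - t ^+ (2 ^ l0) =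
      (t ^+ (2 ^ k0) - nth 0 s (f k0)) - (t ^+ (2 ^ l0) - nth 0 s (f l0)) by rewrite e; ring.
    by apply: d2_sub.
  have el : (2 ^ l0 = 2 ^ (l0 - k0) * 2 ^ k0)%N by rewrite -expnD subnK // ltnW.
  rewrite el exprM in h.
  have h2 := sq_injn hR _ _ _ h.
  exists (t ^+ (2 ^ (l0 - k0).-1)).
  by rewrite -exprM -expnSr prednK // subn_gt0.
have [lt|gt|eq] := ltngtP k l.
- exact: key fkl.
- exact: key (esym fkl).
- by move: kl; rewrite (val_inj eq) eqxx.
Qed.

Lemma hensel {R : idomainType} (hR : dyadic_local_ring R) (rho d : R) :
  dvd2pow 1 d -> exists mu, mu = d + rho * mu ^+ 2.
Proof.
move=> hd.
pose f := fix f n := if n is m.+1 then d + rho * (f m) ^+ 2 else 0.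
have f2 : forall n, dvd2pow 1 (f n).
  case=> [|n] /=; first exact: d2_0.
  apply: d2_add => //; apply: d2_mull; rewrite expr2; apply: d2_mull.
  elim: n => [|n IH] /=; first exact: d2_0.
  by apply: d2_add => //; apply: d2_mull; rewrite expr2; apply: d2_mull.
have fd : forall n, dvd2pow n.+1 (f n.+1 - f n).
  elim=> [|n IH]; first by rewrite /= expr2 mulr0 mulr0 addr0 subr0.
  have -> : f n.+2 - f n.+1 = rho * ((f n.+1 - f n) * (f n.+1 + f n)) by rewrite /=; ring.
  apply: d2_mull; rewrite -addn1; apply: d2_mul => //; exact: d2_add.
have [mu hmu] := complete hR (fun n => d2_S _ _ (fd n)).
exists mu; apply/eqP; rewrite -subr_eq0; apply/eqP; apply: (d2_all0 hR) => n.
have -> : mu - (d + rho * mu ^+ 2) = (mu - f n.+1) + rho * ((f n - mu) * (f n + mu)) by rewrite /=; ring.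
apply: d2_add; first exact: d2_S _ _ (hmu n.+1).
apply: d2_mull; apply: d2_mulr; rewrite -opprB; apply: d2_opp; exact: hmu.
Qed.

Lemma eps_sqrt {R : idomainType} (hR : dyadic_local_ring R) (eps : R) :
  eps \is a GRing.unit -> exists s, s \is a GRing.unit /\ dvd2pow 1 (1 - eps * s ^+ 2).
Proof.
move=> he; have [y hy] := residue_sqrt hR eps^-1.
have h1 : dvd2pow 1 (1 - eps * y ^+ 2).
  have -> : 1 - eps * y ^+ 2 = eps * (eps^-1 - y ^+ 2) by rewrite mulrBr mulrV.
  exact: d2_mull.
exists y; split => //.
have : (eps * y ^+ 2) \is a GRing.unit.
  apply: (nondiv_unit hR) => h; move/negP: (two_nonunit hR); apply.
  have [z hz] := d2_add _ _ _ h1 h; move: hz; rewrite subrK expr1 => hz.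
  by apply/unitrPr; exists z; rewrite -hz.
by rewrite unitrM unitrX_pos ?andbT // => /andP [].
Qed.

Lemma ds_of_rinv {R : idomainType} n m (X : 'M[R]_(n, m)) (C : 'M[R]_(m, n)) :
  X *m C = 1%:M -> direct_summand (rowspan X).
Proof.
move=> hXC; exists (fun w => w *m C = 0); split.
- by rewrite mul0mx.
- by move=> x y hx hy; rewrite mulmxDl hx hy addr0.
- by move=> c x hx; rewrite -scalemxAl hx scaler0.
- move=> v; exists (v *m C *m X), (v - v *m C *m X); split.
  + by exists (v *m C).
  + by rewrite mulmxBl -!mulmxA hXC mulmx1 subrr.
  + by rewrite addrC subrK.
- move=> v [u ->] h; by move: h; rewrite -mulmxA hXC mulmx1 => ->; rewrite mul0mx.
Qed.

Lemma rinv_of_ds {R : idomainType} k (v : 'rV[R]_k) :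
  v != 0 -> direct_summand (rowspan v) -> exists c : 'cV[R]_k, v *m c = 1%:M.
Proof.
move=> v0 [N [N0 ND NZ Ndec Nint]].
have : forall j : 'I_k, exists ub : 'M[R]_1 * 'rV[R]_k,
    N ub.2 /\ delta_mx 0 j = ub.1 *m v + ub.2.
  move=> j; have [a [b [[u ->] hb e]]] := Ndec (delta_mx 0 j).
  by exists (u, b).
case/fin_all_exists => ub hub.
pose c : 'cV[R]_k := \col_j (ub j).1 0 0.
pose g := (v *m c) 0 0.
have hsum : N (\sum_j v 0 j *: (ub j).2).
  apply: (big_ind N); [exact: N0 | exact: ND | ].
  by move=> j _; apply: NZ; case: (hub j).
have ev : v = g *: v + \sum_j v 0 j *: (ub j).2.
  rewrite {1}[v]row_sum_delta.
  under eq_bigr => j _ do rewrite (proj2 (hub j)) scalerDr [(ub j).1]mx11_scalar mul_scalar_mx scalerA.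
  rewrite big_split /= -scaler_suml /g !mxE; congr (_ *: _ + _).
  by apply: eq_bigr => j _; rewrite mxE.
have h0 : (1 - g) *: v = 0.
  apply: Nint; last by rewrite scalerBl scale1r {1}ev addrC addKr.
  by exists (1 - g)%:M; rewrite mul_scalar_mx.
have g1 : g = 1.
  move/eqP: h0; rewrite scalemx_eq0 (negbTE v0) orbF subr_eq0 => /eqP <-//.
exists c; rewrite [v *m c]mx11_scalar; by congr (_%:M).
Qed.

Definition m22 {R : idomainType} (a b c d : R) : 'M[R]_2 :=
  \matrix_(i < 2, j < 2) if val i == 0%N then (if val j == 0%N then a else b)
                         else (if val j == 0%N then c else d).
Definition c2 {R : idomainType} (a b : R) : 'cV[R]_2 := \col_(i < 2) if val i == 0%N then a else b.
Definition r2 {R : idomainType} (a b : R) : 'rV[R]_2 := \row_(i < 2) if val i == 0%N then a else b.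

Lemma gram_rowmx {R : idomainType} k (X1 : 'M[R]_2) (w : 'cV[R]_2) (v : 'rV[R]_k) (J : 'M[R]_k) :
  row_mx X1 (w *m v) *m osum (hypmx 1) J *m (row_mx X1 (w *m v))^T
  = X1 *m hypmx 1 *m X1^T + Qf J v *: (w *m w^T).
Proof.
rewrite /osum mul_row_block ?mul0mx ?mulmx0 ?addr0 ?add0r tr_row_mx mul_row_col.
congr (_ + _).
rewrite trmx_mul !mulmxA -(mulmxA w) -(mulmxA w).
rewrite [v *m J *m v^T]mx11_scalar -/(Qf J v) mul_mx_scalar scalemxAl //.
Qed.

Lemma xc_rowmx {R : idomainType} k (X1 C1 : 'M[R]_2) (w : 'cV[R]_2) (v : 'rV[R]_k)
  (c : 'cV[R]_k) (d : 'rV[R]_2) :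
  v *m c = 1%:M ->
  row_mx X1 (w *m v) *m col_mx C1 (c *m d) = X1 *m C1 + w *m d.
Proof.
by move=> h; rewrite mul_row_col !mulmxA -(mulmxA w) h mulmx1.
Qed.

Ltac mx22 := apply/matrixP; case=> [[|[|//]]] ?; case=> [[|[|//]]] ?;
  repeat (rewrite mxE || rewrite big_ord_recl || rewrite big_ord0); rewrite /=.


Lemma hpow_rep {R : idomainType} n (L : 'M[R]_n) :
  L^T = L -> (forall i, exists y, L i i = 2 * y) ->
  exists X : 'M[R]_(n, n.*2), exists C : 'M[R]_(n.*2, n),
    X *m Hpow R n *m X^T = L /\ X *m C = 1%:M.
Proof.
elim: n L => [|n IH] L hsym hdiag.
  exists 0, 0; split; apply/matrixP => -[i hi]; by [].
have sym i j : L i j = L j i by rewrite -{1}hsym mxE.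
pose L1 : 'M[R]_(1 + n) := L.
pose L' : 'M[R]_n := drsubmx L1.
have hL's : L'^T = L' by rewrite /L' trmx_drsub /L1 hsym.
have hL'd : forall i, exists y, L' i i = 2 * y.
  by move=> i; rewrite /L' !mxE; apply: hdiag.
have [X' [C' [hX' hC']]] := IH L' hL's hL'd.
have [y0 hy0] := hdiag ord0.
pose X11 : 'M[R]_(1, 2) := r2 1 y0.
pose X21 : 'M[R]_(n, 2) := \matrix_(i < n, j < 2) if val j == 0%N then 0 else dlsubmx L1 i 0.
pose X : 'M[R]_(1 + n, 2 + n.*2) := block_mx X11 0 X21 X'.
pose C : 'M[R]_(2 + n.*2, 1 + n) := block_mx (c2 1 0) 0 0 C'.
suff [h1 h2] : X *m osum (hypmx (1 : R)) (Hpow R n) *m X^T = L1 /\ X *m C = 1%:M.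
  by exists X, C.
split.
  rewrite /osum tr_block_mx !mulmx_block ?mul0mx ?mulmx0 ?addr0 ?add0r ?trmx0 ?mul0mx ?mulmx0 ?addr0 ?add0r.
  apply: (etrans _ (submxK L1)).
  congr block_mx.
  - apply/matrixP => i j; rewrite !ord1.
    repeat (rewrite mxE || rewrite big_ord_recl || rewrite big_ord0); rewrite /=.
    have -> : lshift n (0 : 'I_1) = (0 : 'I_(n.+1)) by apply: val_inj.
    rewrite /L1 hy0; ring.
  - apply/matrixP => i j; rewrite !ord1.
    repeat (rewrite mxE || rewrite big_ord_recl || rewrite big_ord0); rewrite /=.
    rewrite /L1 sym; ring.
  - apply/matrixP => i j; rewrite !ord1.
    repeat (rewrite mxE || rewrite big_ord_recl || rewrite big_ord0); rewrite /=.
    ring.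
  - rewrite hX' -[RHS]add0r; congr (_ + _).
    apply/matrixP => i j.
    repeat (rewrite mxE || rewrite big_ord_recl || rewrite big_ord0); rewrite /=.
    ring.
rewrite !mulmx_block ?mul0mx ?mulmx0 ?addr0 ?add0r hC'.
apply: (etrans _ (esym (scalar_mx_block 1 n 1))).
congr block_mx.
- apply/matrixP => i j; rewrite !ord1.
  repeat (rewrite mxE || rewrite big_ord_recl || rewrite big_ord0); rewrite /=.
  ring.
- apply/matrixP => i j; rewrite !ord1.
  repeat (rewrite mxE || rewrite big_ord_recl || rewrite big_ord0); rewrite /=.
  ring.
Qed.

Lemma Qf_scale {R : idomainType} k (J : 'M[R]_k) (c : R) v :
  Qf J (c *: v) = c ^+ 2 * Qf J v.
Proof.
rewrite /Qf linearZ /= -scalemxAl -scalemxAr -scalemxAl !mxE; ring.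
Qed.

Lemma prim_vec_aux {R : idomainType} (hR : dyadic_local_ring R) k K :
  forall v : 'rV[R]_k, (exists i u, u \is a GRing.unit /\ v 0 i = u * 2 ^+ K) ->
  exists m (v' : 'rV[R]_k) i, v = 2 ^+ m *: v' /\ v' 0 i \is a GRing.unit.
Proof.
elim: K => [|K IH] v [i [u [hu hv]]].
  by exists 0%N, v, i; rewrite expr0 scale1r hv expr0 mulr1.
case: (classic (exists j, ~ dvd2pow 1 (v 0 j))) => [[j hj]|hall].
  by exists 0%N, v, j; rewrite expr0 scale1r; split=> //; apply: (nondiv_unit hR).
have : forall j, exists y, v 0 j = 2 ^+ 1 * y.
  move=> j; apply: NNPP => hn; apply: hall; exists j; exact: hn.
case/fin_all_exists => y hy.
pose v2 : 'rV[R]_k := \row_j y j.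
have ev : v = 2 *: v2 by apply/matrixP => a b; rewrite !mxE ord1 hy expr1.
have [m [v' [i' [e hu']]]] : exists m (v' : 'rV[R]_k) i, v2 = 2 ^+ m *: v' /\ v' 0 i \is a GRing.unit.
  apply: IH; exists i, u; split => //.
  apply: (mulIf (two_neq0 hR)); rewrite mxE [y i * 2]mulrC (_ : 2 * y i = v 0 i); last by rewrite hy expr1.
  rewrite hv exprSr; ring.
exists m.+1, v', i'; split => //; by rewrite ev e scalerA exprS.
Qed.

Lemma prim_vec {R : idomainType} (hR : dyadic_local_ring R) k (v : 'rV[R]_k) :
  v != 0 -> exists m (v' : 'rV[R]_k) i, v = 2 ^+ m *: v' /\ v' 0 i \is a GRing.unit.
Proof.
move=> v0.
have [i hi] : exists i, v 0 i != 0.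
  apply: NNPP => h; move/eqP: v0; apply; apply/matrixP => a b.
  rewrite ord1 mxE; apply/eqP; apply: NNPP => hb; apply: h; by exists b; apply/negP.
have [K [u [hu e]]] := unit_pow2_factor hR hi.
apply: (prim_vec_aux hR k K v); exists i, u; by split.
Qed.

Lemma unit_coord_rinv {R : idomainType} k (v : 'rV[R]_k) i :
  v 0 i \is a GRing.unit -> exists c : 'cV[R]_k, v *m c = 1%:M.
Proof.
move=> hu; exists ((v 0 i)^-1 *: delta_mx i 0).
rewrite -scalemxAr -colE; apply/matrixP => a b; rewrite !ord1 !mxE /= mulr1n.
by rewrite mulVr.
Qed.

Lemma scale_rinv {R : idomainType} k (v : 'rV[R]_k) (c : 'cV[R]_k) s :
  s \is a GRing.unit -> v *m c = 1%:M -> (s *: v) *m (s^-1 *: c) = 1%:M.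
Proof.
by move=> hs h; rewrite -scalemxAl -scalemxAr h scalerA mulrV // scale1r.
Qed.



Lemma parta {R : idomainType} (hR : dyadic_local_ring R) k (J : 'M[R]_k) :
  isotropic J -> forall a : nat, prim_rep (hypmx (2 ^+ a : R)) (osum (hypmx (1 : R)) J).
Proof.
move=> [v [v0 hq]] a.
have [m [v' [i [ev hu]]]] := prim_vec hR _ _ v0.
have hq' : Qf J v' = 0.
  move: hq; rewrite ev Qf_scale => /eqP; rewrite mulf_eq0 => /orP [|/eqP //].
  by rewrite !expf_eq0 (negbTE (two_neq0 hR)) !andbF.
have [c hc] := unit_coord_rinv _ _ _ hu.
exists (row_mx (m22 1 0 0 (2 ^+ a)) (c2 0 1 *m v')); split.
  by rewrite gram_rowmx hq'; mx22; ring.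
apply: (@ds_of_rinv _ _ _ _ (col_mx (m22 1 0 0 0) (c *m r2 0 1))).
by rewrite xc_rowmx //; mx22; ring.
Qed.

Lemma partb {R : idomainType} (hR : dyadic_local_ring R) (rho : R) k (J : 'M[R]_k) (a : nat) (eps : R) :
  eps \is a GRing.unit -> prim_rep_elt J (2 ^+ a.+1 * eps) ->
     prim_rep (hypmx (2 ^+ a : R)) (osum (hypmx (1 : R)) J) /\
     prim_rep (anmx rho (2 ^+ a : R)) (osum (hypmx (1 : R)) J).
Proof.
move=> heps [v [hq hds]].
have v0 : v != 0.
  apply/eqP => e; move: hq; rewrite e /Qf !mul0mx mxE => /eqP.
  rewrite eq_sym mulf_eq0 expf_eq0 (negbTE (two_neq0 hR)) andbF /=.
  apply/negP; apply/eqP => e0; move: heps; by rewrite e0 unitr0.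
have [c hc] := rinv_of_ds _ _ v0 hds.
rewrite exprS in hq.
split.
  exists (row_mx (m22 (2 ^+ a) (- eps) 0 1) (c2 1 0 *m v)); split.
    by rewrite gram_rowmx hq; mx22; ring.
  apply: (@ds_of_rinv _ _ _ _ (col_mx (m22 0 0 0 1) (c *m r2 1 eps))).
  by rewrite xc_rowmx //; mx22; ring.
have [s [hs hd]] := eps_sqrt hR _ heps.
have [mu hmu] := hensel hR rho _ hd.
have hz : eps * s ^+ 2 - 1 + mu - rho * mu ^+ 2 = 0.
  have hz0 : mu - ((1 - eps * s ^+ 2) + rho * mu ^+ 2) = 0 by rewrite {1}hmu subrr.
  by rewrite -hz0; ring.
exists (row_mx (m22 (2 ^+ a * (1 - mu * rho)) mu (rho * 2 ^+ a) 1) (c2 1 0 *m (s *: v))); split.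
  rewrite gram_rowmx Qf_scale hq; mx22.
  - apply/eqP; rewrite -subr_eq0; apply/eqP.
    transitivity (2 * 2 ^+ a * (eps * s ^+ 2 - 1 + mu - rho * mu ^+ 2)); first by ring.
    by rewrite hz mulr0.
  - ring.
  - ring.
  - ring.
apply: (@ds_of_rinv _ _ _ _ (col_mx (m22 0 0 0 1) ((s^-1 *: c) *m r2 1 (- mu)))).
by rewrite xc_rowmx ?scale_rinv //; mx22; ring.
Qed.

Theorem lemma4p1 (R : idomainType) (hR : dyadic_local_ring R)
  (rho : R) (hrho : rho \is a GRing.unit)
  (hDelta : (1 - 4 * rho) \is a GRing.unit /\ ~ exists y : R, y ^+ 2 = 1 - 4 * rho) :
  (* (a) *)
  (forall (k : nat) (J : 'M[R]_k), is_lattice J -> isotropic J ->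
     forall a : nat, prim_rep (hypmx (2 ^+ a : R)) (osum (hypmx (1 : R)) J)) /\
  (* (b) *)
  (forall (k : nat) (J : 'M[R]_k) (a : nat) (eps : R), is_lattice J ->
     eps \is a GRing.unit -> prim_rep_elt J (2 ^+ a.+1 * eps) ->
     prim_rep (hypmx (2 ^+ a : R)) (osum (hypmx (1 : R)) J) /\
     prim_rep (anmx rho (2 ^+ a : R)) (osum (hypmx (1 : R)) J)) /\
  (* in particular *)
  (forall a : nat,
     prim_rep (hypmx (2 ^+ a : R)) (osum (hypmx (1 : R)) (hypmx (1 : R))) /\
     prim_rep (anmx rho (2 ^+ a : R)) (osum (hypmx (1 : R)) (hypmx (1 : R)))) /\
  (* hence *)
  (forall (n : nat) (L : 'M[R]_n), (1 <= n)%N -> is_lattice L -> is_even L ->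
     prim_rep L (Hpow R n)).
Proof.
split; [| split; [| split]].
- move=> k J _ hiso a; exact: (parta hR k J hiso a).
- move=> k J a eps _ heps hp; exact: (partb hR rho k J a eps heps hp).
- move=> a; apply: (partb hR rho 2 (hypmx 1) a 1 (unitr1 R)).
  exists (r2 1 (2 ^+ a)); split.
    rewrite /Qf; repeat (rewrite mxE || rewrite big_ord_recl || rewrite big_ord0); rewrite /= exprS; ring.
  apply: (@ds_of_rinv _ _ _ _ (c2 1 0)).
  apply/matrixP => i j; rewrite !ord1.
  repeat (rewrite mxE || rewrite big_ord_recl || rewrite big_ord0); rewrite /=; ring.
- move=> n L _ [hsym _] hev.
  have hdiag : forall i, exists y, L i i = 2 * y.
    move=> i; have [y hy] := hev (delta_mx 0 i); exists y.
    have e : Qf L (delta_mx 0 i) = L i i by rewrite /Qf trmx_delta -rowE -colE !mxE.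
    by rewrite -e hy expr1.
  have [X [C [h1 h2]]] := hpow_rep _ L hsym hdiag.
  exists X; split => //; exact: (ds_of_rinv _ _ _ _ h2).
Qed.
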